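(* Let $A$ be a finite set with $q:=|A|\ge 2$ and $n\ge 2$. The alternating group $\mathrm{Alt}(A^n)$ is generated by the instructions that are even permutations of $A^n$, unless $q=2$ and $n\in\{2,3\}$.
   Context: Any $f\in\mathrm{Sym}(A^n)$ is written $f(x)=(f_1(x),\ldots,f_n(x))$ with coordinate functions $f_i:A^n\to A$; the $i$-th coordinate function is trivial if $f_i(x)=x_i$ for all $x$. An instruction is a permutation of $A^n$ with at most one nontrivial coordinate function (the identity counts as an instruction). (The paper phrases the conclusion as: $\mathrm{Alt}(A^n)$ is internally computable, meaning it is generated by $\mathrm{Alt}(A^n)\cap\mathcal{I}$, where $\mathcal{I}$ is the set of instructions.) *)

(* Defs.v *)
From mathcomp Require Import all_boot all_order all_fingroup all_solvable alt.
Set Implicit Arguments. Unset Strict Implicit. Unset Printing Implicit Defensive.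

(* A^n is represented as the finite type {ffun 'I_n -> A}; for x in A^n,
   x j is the j-th coordinate and (f x) j is the coordinate function f_j. *)
Definition instruction (A : finType) (n : nat) (f : {perm {ffun 'I_n -> A}}) : bool :=
  [exists i : 'I_n, forall j : 'I_n, forall x : {ffun 'I_n -> A},
     (j != i) ==> (f x j == x j)].

(* Main.v *)
Require Import Defs.
From mathcomp Require Import all_boot all_order all_fingroup all_solvable alt.
From mathcomp Require Import zify.
Set Implicit Arguments. Unset Strict Implicit. Unset Printing Implicit Defensive.

Local Open Scope group_scope.

Definition HG (A : finType) (n : nat) :=
  <<[set f in Alt {ffun 'I_n -> A} | instruction f]>>.

Definition EE (A : finType) (n : nat) (x y u v : {ffun 'I_n -> A}) :=
  tperm x y * tperm u v \in HG A n.

Definition only (A : finType) (n : nat) (i : 'I_n) (x y : {ffun 'I_n -> A}) :=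
  forall j, j != i -> x j = y j.

Definition upd (A : finType) (n : nat) (x : {ffun 'I_n -> A}) (i : 'I_n) (v : A) :
  {ffun 'I_n -> A} := [ffun j => if j == i then v else x j].

Lemma E_sym (A : finType) n (x y u v : {ffun 'I_n -> A}) : EE x y u v -> EE u v x y.
Proof. by rewrite /EE => h; have := groupVr h; rewrite invMg !tpermV. Qed.

Lemma E_trans (A : finType) n (x y u v w z : {ffun 'I_n -> A}) :
  EE x y u v -> EE u v w z -> EE x y w z.
Proof.
rewrite /EE => h1 h2; have := groupM h1 h2.
by rewrite -mulgA (mulgA (tperm u v)) tperm2 mul1g.
Qed.

Lemma E_C1 (A : finType) n (x y u v : {ffun 'I_n -> A}) : EE x y u v -> EE y x u v.
Proof. by rewrite /EE tpermC. Qed.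

Lemma E_C2 (A : finType) n (x y u v : {ffun 'I_n -> A}) : EE x y u v -> EE x y v u.
Proof. by rewrite /EE (tpermC u). Qed.

Lemma E_conj (A : finType) n (g : {perm {ffun 'I_n -> A}}) (x y u v : {ffun 'I_n -> A}) :
  g \in HG A n -> EE x y u v -> EE (g x) (g y) (g u) (g v).
Proof. by rewrite /EE => hg h; have := groupJ h hg; rewrite conjMg !tpermJ. Qed.

Lemma E_tri (A : finType) n (x y z : {ffun 'I_n -> A}) :
  x != z -> y != z -> x != y -> EE x z z y -> EE x y z y.
Proof.
move=> xz yz xy h; have := E_sym h; rewrite /EE.
have -> : tperm x y = (tperm x z) ^ (tperm z y).
  by rewrite tpermJ tpermD ?tpermL // eq_sym.
rewrite /conjg tpermV -!mulgA tperm2 mulg1.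
by [].
Qed.

Lemma tperm_coord (A : finType) n (i : 'I_n) (x y w : {ffun 'I_n -> A}) j :
  only i x y -> j != i -> tperm x y w j = w j.
Proof. by move=> h ji; case: tpermP => // ->; rewrite h. Qed.

Lemma E_dir (A : finType) n (i : 'I_n) (x y u v : {ffun 'I_n -> A}) :
  x != y -> u != v -> only i x y -> only i u v -> EE x y u v.
Proof.
move=> xy uv hxy huv; apply: mem_gen.
rewrite inE Alt_even odd_permM !odd_tperm xy uv /=.
apply/existsP; exists i; apply/forallP=> j; apply/forallP=> w; apply/implyP=> ji.
by rewrite permM (tperm_coord _ huv) // (tperm_coord _ hxy).
Qed.

Lemma neq_at (A : finType) n (x y : {ffun 'I_n -> A}) j : x j != y j -> x != y.
Proof. by apply: contra => /eqP ->. Qed.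

Lemma only_upd (A : finType) n (x : {ffun 'I_n -> A}) i v : only i x (upd x i v).
Proof. by move=> j ji; rewrite ffunE (negbTE ji). Qed.

Definition DL (A : finType) n := forall i j : 'I_n, i != j ->
  exists x y u v : {ffun 'I_n -> A},
    [/\ x != y, u != v, only i x y, only j u v & EE x y u v].

Lemma edge_all (A : finType) n : DL A n ->
  forall i j (x y u v : {ffun 'I_n -> A}),
  x != y -> u != v -> only i x y -> only j u v -> EE x y u v.
Proof.
move=> dl i j x y u v xy uv hxy huv.
have [ij|ij] := eqVneq i j; first by subst j; exact: E_dir hxy huv.
have [x0 [y0 [u0 [v0 [x0y0 u0v0 h0 h1 h2]]]]] := dl i j ij.
apply: E_trans (E_dir xy x0y0 hxy h0) _.
exact: E_trans h2 (E_dir u0v0 uv h1 huv).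
Qed.

Definition isedge (A : finType) n (u v : {ffun 'I_n -> A}) :=
  u != v /\ exists i, only i u v.

Lemma diff_coord (A : finType) n (x y : {ffun 'I_n -> A}) :
  x != y -> exists k, x k != y k.
Proof.
move=> xy; have : [exists k, x k != y k].
  apply: contraR xy; rewrite negb_exists => /forallP h.
  by apply/eqP/ffunP => j; apply/eqP; have := h j; rewrite negbK.
by case/existsP=> k hk; exists k.
Qed.

Lemma full_aux (A : finType) n : DL A n -> forall m (x y u v : {ffun 'I_n -> A}),
  #|[pred j | x j != y j]| <= m -> x != y -> isedge u v -> EE x y u v.
Proof.
move=> dl; elim=> [|m IH] x y u v hd xy [uv [i hi]].
  have [k hk] := diff_coord xy.
  have : 0 < #|[pred j | x j != y j]| by apply/card_gt0P; exists k.
  by rewrite leqn0 in hd; rewrite (eqP hd).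
have [k hk] := diff_coord xy.
set z := upd x k (y k).
have xz : x != z by apply: (neq_at (j:=k)); rewrite ffunE eqxx.
have hxz : only k x z by apply: only_upd.
have [zy|zy] := eqVneq z y.
  by have := edge_all dl xz uv hxz hi; rewrite zy.
have h1 : EE x z u v := edge_all dl xz uv hxz hi.
have h2 : EE z y u v.
  apply: IH => //; last by split=> //; exists i.
  have : [pred j | z j != y j] \proper [pred j | x j != y j].
    apply/properP; split.
      apply/subsetP=> j; rewrite !inE ffunE.
      by case: ifP => [/eqP ->|_]; rewrite ?eqxx.
    by exists k; rewrite !inE ?ffunE ?eqxx.
  move/proper_card => hlt; rewrite -ltnS; exact: leq_trans hlt hd.
have h3 : EE x z z y by apply: E_trans h1 (E_sym h2).
have yz : y != z by rewrite eq_sym.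
have h4 := E_tri xz yz xy h3.
exact: E_trans h4 h2.
Qed.

Lemma full (A : finType) n : DL A n -> forall (x y u v : {ffun 'I_n -> A}),
  x != y -> u != v -> EE x y u v.
Proof.
move=> dl x y u v xy uv.
have [k hk] := diff_coord uv.
set w := upd u k (v k).
have ew : isedge u w.
  split; last by exists k; apply: only_upd.
  by apply: (neq_at (j:=k)); rewrite ffunE eqxx.
have h1 := full_aux dl (leqnn _) xy ew.
have h2 := full_aux dl (leqnn _) uv ew.
exact: E_trans h1 (E_sym h2).
Qed.

Lemma prod_in (A : finType) n : DL A n ->
  forall ts : seq ({ffun 'I_n -> A} * {ffun 'I_n -> A}), all dpair ts ->
  (~~ odd (size ts) -> \prod_(t <- ts) tperm t.1 t.2 \in HG A n) /\
  (odd (size ts) -> forall x y, x != y ->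
     tperm x y * \prod_(t <- ts) tperm t.1 t.2 \in HG A n).
Proof.
move=> dl; elim=> [|[a b] ts IH] /=.
  by move=> _; split=> // _; rewrite big_nil group1.
case/andP=> /= ab hts; have [IH1 IH2] := IH hts.
rewrite big_cons /=; split.
  by rewrite negbK => ho; apply: IH2.
move=> ho x y xy; rewrite mulgA; apply: groupM; first exact: full.
exact: IH1.
Qed.

Theorem proposition2_of_DL (A : finType) (n : nat) : DL A n ->
  Alt {ffun 'I_n -> A} =
  <<[set f in Alt {ffun 'I_n -> A} | instruction f]>>%g.
Proof.
move=> dl; apply/eqP; rewrite eqEsubset; apply/andP; split; last first.
  by rewrite gen_subG; apply/subsetP=> f; rewrite inE => /andP[].
apply/subsetP=> s; rewrite Alt_even => hs.
case: (prod_tpermP s) => ts def_s hd.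
rewrite def_s odd_perm_prod // in hs; rewrite def_s.
exact: ((prod_in dl hd).1 hs).
Qed.
Lemma other1 (A : finType) : 1 < #|A| -> forall t : A, exists w, w != t.
Proof.
case/card_gt1P=> x [y [_ _ xy]] t.
have [xt|xt] := eqVneq x t; last by exists x.
by exists y; rewrite -xt eq_sym.
Qed.

Lemma other2 (A : finType) : 2 < #|A| -> forall t : A,
  exists w1 w2, [/\ w1 != t, w2 != t & w1 != w2].
Proof.
move=> h t; have : 1 < #|predC1 t| by rewrite cardC1; lia.
by case/card_gt1P=> x [y [xt yt xy]]; exists x, y; split.
Qed.

Lemma coords n : 3 < n -> forall i j : 'I_n, exists k l,
  [/\ k != i, k != j, l != i, l != j & k != l].
Proof.
move=> hn i j.
have : 1 < #|~: [set i; j]|.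
  have := cardsCs (~: [set i; j]); rewrite setCK cards2 card_ord => ->.
  by case: (i != j); lia.
case/card_gt1P=> k [l []]; rewrite !inE !negb_or => /andP[ki kj] /andP[li lj] kl.
by exists k, l.
Qed.

Lemma only_pair (A : finType) n (a : {ffun 'I_n -> A}) i v w :
  only i (upd a i v) (upd a i w).
Proof. by move=> k ki; rewrite !ffunE (negbTE ki). Qed.

Lemma DL_A (A : finType) n (a : {ffun 'I_n -> A}) : 2 < #|A| -> DL A n.
Proof.
move=> hA i j ij.
have [w1 [w2 [w1a w2a w12]]] := other2 hA (a i).
have [v1 [v2 [v1a v2a v12]]] := other2 hA (a j).
have ji : j != i by rewrite eq_sym.
have aw1 : a i != w1 by rewrite eq_sym.
have aw2 : a i != w2 by rewrite eq_sym.
have av1 : a j != v1 by rewrite eq_sym.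
have av2 : a j != v2 by rewrite eq_sym.
have w21 : w2 != w1 by rewrite eq_sym.
have v21 : v2 != v1 by rewrite eq_sym.
have R := (negbTE ij, negbTE ji).
set b := upd a i w1; set c := upd a i w2; set a1 := upd a j v1; set a2 := upd a j v2.
have ab : a != b by apply: (neq_at (j:=i)); rewrite !ffunE ?eqxx ?R.
have ac : a != c by apply: (neq_at (j:=i)); rewrite !ffunE ?eqxx ?R.
have cb : c != b by apply: (neq_at (j:=i)); rewrite !ffunE ?eqxx ?R.
have aa1 : a != a1 by apply: (neq_at (j:=j)); rewrite !ffunE ?eqxx ?R.
have aa2 : a != a2 by apply: (neq_at (j:=j)); rewrite !ffunE ?eqxx ?R.
have ba1 : b != a1 by apply: (neq_at (j:=j)); rewrite !ffunE ?eqxx ?R.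
have ba2 : b != a2 by apply: (neq_at (j:=j)); rewrite !ffunE ?eqxx ?R.
have ca1 : c != a1 by apply: (neq_at (j:=j)); rewrite !ffunE ?eqxx ?R.
have ca2 : c != a2 by apply: (neq_at (j:=j)); rewrite !ffunE ?eqxx ?R.
have a12 : a1 != a2 by apply: (neq_at (j:=j)); rewrite !ffunE ?eqxx ?R.
have hg : (tperm a b * tperm a c)%g \in HG A n.
  by have := E_dir ab ac (@only_upd _ _ a i w1) (@only_upd _ _ a i w2).
have h1 : EE a a1 a1 a2 := E_dir aa1 a12 (@only_upd _ _ a j v1) (@only_pair _ _ a j v1 v2).
have h2 := E_conj hg h1.
rewrite !permM tpermL (tpermD ab cb) !(tpermD aa1 ba1) !(tpermD aa1 ca1) in h2.
rewrite !(tpermD aa2 ba2) !(tpermD aa2 ca2) in h2.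
exists a, b, a1, a2; split => //; [exact: only_upd | exact: only_pair |].
have h3 : EE a a1 a1 b by apply: E_C2; apply: E_trans h1 (E_sym h2).
have h4 := E_tri aa1 (negbT (negbTE ba1)) ab h3.
apply: E_trans h4 _; apply: E_C1; exact: h2.
Qed.

Lemma DL_B (A : finType) n (a : {ffun 'I_n -> A}) : 1 < #|A| -> 3 < n -> DL A n.
Proof.
move=> hA hn i j ij.
have [k [l [ki kj li lj kl]]] := coords hn i j.
have [wi wia] := other1 hA (a i).
have [wj wja] := other1 hA (a j).
have [wk wka] := other1 hA (a k).
have [wl wla] := other1 hA (a l).
have ji : j != i by rewrite eq_sym.
have ik : i != k by rewrite eq_sym.
have jk : j != k by rewrite eq_sym.
have il : i != l by rewrite eq_sym.
have jl : j != l by rewrite eq_sym.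
have lk : l != k by rewrite eq_sym.
have awi : a i != wi by rewrite eq_sym.
have awj : a j != wj by rewrite eq_sym.
have awk : a k != wk by rewrite eq_sym.
have awl : a l != wl by rewrite eq_sym.
have R := (negbTE ij, negbTE ji, negbTE ik, negbTE ki, negbTE jk, negbTE kj,
           negbTE il, negbTE li, negbTE jl, negbTE lj, negbTE kl, negbTE lk).
set ai := upd a i wi; set aj := upd a j wj; set b := upd a k wk.
set bi := upd b i wi; set u := upd a l wl; set uj := upd u j wj.
have aai : a != ai by apply: (neq_at (j:=i)); rewrite !ffunE ?eqxx ?R.
have bbi : b != bi by apply: (neq_at (j:=i)); rewrite !ffunE ?eqxx ?R.
have uuj : u != uj by apply: (neq_at (j:=j)); rewrite !ffunE ?eqxx ?R.
have bai : b != ai by apply: (neq_at (j:=k)); rewrite !ffunE ?eqxx ?R.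
have biai : bi != ai by apply: (neq_at (j:=k)); rewrite !ffunE ?eqxx ?R.
have aaj : a != aj by apply: (neq_at (j:=j)); rewrite !ffunE ?eqxx ?R.
have aiaj : ai != aj by apply: (neq_at (j:=j)); rewrite !ffunE ?eqxx ?R.
have baj : b != aj by apply: (neq_at (j:=k)); rewrite !ffunE ?eqxx ?R.
have biaj : bi != aj by apply: (neq_at (j:=k)); rewrite !ffunE ?eqxx ?R.
have au : a != u by apply: (neq_at (j:=l)); rewrite !ffunE ?eqxx ?R.
have aiu : ai != u by apply: (neq_at (j:=l)); rewrite !ffunE ?eqxx ?R.
have bu : b != u by apply: (neq_at (j:=l)); rewrite !ffunE ?eqxx ?R.
have biu : bi != u by apply: (neq_at (j:=l)); rewrite !ffunE ?eqxx ?R.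
have auj : a != uj by apply: (neq_at (j:=l)); rewrite !ffunE ?eqxx ?R.
have aiuj : ai != uj by apply: (neq_at (j:=l)); rewrite !ffunE ?eqxx ?R.
have buj : b != uj by apply: (neq_at (j:=l)); rewrite !ffunE ?eqxx ?R.
have biuj : bi != uj by apply: (neq_at (j:=l)); rewrite !ffunE ?eqxx ?R.
have hg : (tperm a ai * tperm b bi)%g \in HG A n.
  by have := E_dir aai bbi (@only_upd _ _ a i wi) (@only_upd _ _ b i wi).
have h1 : EE a aj u uj := E_dir aaj uuj (@only_upd _ _ a j wj) (@only_upd _ _ u j wj).
have h2 := E_conj hg h1.
rewrite !permM tpermL (tpermD bai biai) (tpermD aaj aiaj) (tpermD baj biaj) in h2.
rewrite (tpermD au aiu) (tpermD bu biu) (tpermD auj aiuj) (tpermD buj biuj) in h2.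
exists a, ai, u, uj; split => //; [exact: only_upd | exact: only_upd |].
have h3 : EE a aj aj ai by apply: E_C2; apply: E_trans h1 (E_sym h2).
have h4 := E_tri aaj aiaj aai h3.
apply: E_trans h4 _; apply: E_C1; exact: h2.
Qed.

Theorem proposition2 (A : finType) (n : nat) :
  2 <= #|A| -> 2 <= n -> ~ (#|A| = 2 /\ (n = 2 \/ n = 3)) ->
  Alt {ffun 'I_n -> A} =
  <<[set f in Alt {ffun 'I_n -> A} | instruction f]>>%g.
Proof.
move=> hA hn hex; apply: proposition2_of_DL.
have [t0 _] : exists t : A, true.
  by move/card_gt1P: hA => [x [_ [_ _ _]]]; exists x.
set a : {ffun 'I_n -> A} := [ffun _ => t0].
have [h3|h2] := ltnP 2 #|A|; first exact: DL_A a h3.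
have hA2 : #|A| = 2 by apply/eqP; rewrite eqn_leq h2 hA.
apply: DL_B a hA _.
case: (ltnP 3 n) => // h'; exfalso; apply: hex; split => //.
have : (n == 2) || (n == 3) by case: n hn h' => [|[|[|[|]]]].
by case/orP=> /eqP ->; [left|right].
Qed.
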